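(* Let $N\ge 1$, let $\mathcal{A}$ be a collection of subsets of $\{1,\dots,N\}$ with $\emptyset\in\mathcal{A}$, which is downward closed (if $A\in\mathcal{A}$ and $B\subseteq A$ then $B\in\mathcal{A}$) and such that every buyer $n$ belongs to some $A\in\mathcal{A}$. Then for every $r>1$, the worst case efficiency loss ratio for binary valued buyers satisfies $$\eta(r,2;\mathcal{A})\le \frac{r-1}{2r-1}\le \frac12 .$$
   Context: Model: buyers $n\in\{1,\dots,N\}$; $\mathcal{A}$ is the collection of feasible sets of winners. Buyer $n$'s type $X_n$ is a discrete random variable taking values $0<x_n^1<\dots<x_n^{K_n}$ with probabilities $p_n^i=\Pr[X_n=x_n^i]>0$; $X_1,\dots,X_N$ are independent. An allocation rule $\pi$ maps each bid vector $v=(v_1,\dots,v_N)$, $v_n\in\{x_n^1,\dots,x_n^{K_n}\}$, to a probability distribution $(\pi_A(v))_{A\in\mathcal{A}}$ on $\mathcal{A}$; set $Q_n(v)=\sum_{A\in\mathcal{A}:n\in A}\pi_A(v)$. Virtual valuation: $w_n(x_n^i)=x_n^i-(x_n^{i+1}-x_n^i)\frac{\sum_{j=i+1}^{K_n}p_n^j}{p_n^i}$ for $i<K_n$, and $w_n(x_n^{K_n})=x_n^{K_n}$. Monotone virtual valuation $\overline{w}_n$: let $(g_n^0,h_n^0)=(0,-x_n^1)$, $(g_n^i,h_n^i)=(\sum_{j\le i}p_n^j,\,-x_n^{i+1}\sum_{j>i}p_n^j)$ for $1\le i\le K_n-1$, $(g_n^{K_n},h_n^{K_n})=(1,0)$;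 let $\overline{h}_n^i$ be the value at $g_n^i$ of the lower convex hull of these points, and $\overline{w}_n(x_n^i)=(\overline{h}_n^i-\overline{h}_n^{i-1})/(g_n^i-g_n^{i-1})$. (For binary types $\{L_n,H_n\}$ with $\Pr[X_n=H_n]=p_n$ this gives $\overline{w}_n(H_n)=H_n$, $\overline{w}_n(L_n)=(L_n-p_nH_n)/(1-p_n)$; for a single-valued type, $\overline{w}_n(x_n^1)=x_n^1$.) An allocation rule is optimal (i.e. it is the allocation rule of a revenue-maximizing Bayesian incentive compatible, individually rational direct mechanism) if for every $v$, $\pi(v)$ is supported on $\arg\max_{A\in\mathcal{A}}\sum_{n\in A}\overline{w}_n(v_n)$, with consistent tie-breaking: if $v_n<v_n'$ and $\overline{w}_n(v_n)=\overline{w}_n(v_n')$ then $Q_n(v_n,v_{-n})\le Q_n(v_n',v_{-n})$ for all $v_{-n}$. Let $\tilde\pi^o$ be an optimal allocation rule maximizing the realized welfare $\mathbb{E}[\sum_n Q_n(X)X_n]$ among all optimal allocation rules. $\mathrm{MSW}=\mathbb{E}[\max_{A\in\mathcal{A}}\sum_{n\in A}X_n]$, and $\mathrm{ELR}(\pi)=(\mathrm{MSW}-\mathbb{E}[\sum_nQ_n(X)X_n])/\mathrm{MSW}$. $\mathcal{D}_{r,K}$ is the set of all such type distributions with $K_n\le K$ for all $n$, $x_n^1>0$, $p_n^i>0$, and $(\max_n x_n^{K_n})/(\min_n x_n^1)\le r$. The worst case ELR is $\eta(r,K;\mathcal{A})=\sup_{\mathcal{D}_{r,K}}\mathrm{ELR}(\tilde\pi^o)$.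 *)

(* Defs.v *)
From HB Require Import structures.
From mathcomp Require Import all_boot all_order all_algebra.
From mathcomp Require Import boolp classical_sets reals constructive_ereal ereal.
Set Implicit Arguments.
Unset Strict Implicit.
Unset Printing Implicit Defensive.
Import Order.TTheory GRing.Theory Num.Theory.
Local Open Scope ring_scope.

Section Model.
Variables (R : realType) (N K : nat).

(* Buyer n has Kn n support points; 0-based index i < Kn n corresponds to
   the paper's x_n^{i+1}; xv n i is the value, pr n i its probability. *)
Record typedist := TypeDist {
  Kn : 'I_N -> nat;
  xv : 'I_N -> nat -> R;
  pr : 'I_N -> nat -> R }.

Definition wf_dist (D : typedist) : Prop :=
  (forall n, (0 < Kn D n)%N) /\
  (forall n, 0 < xv D n 0) /\
  (forall n (i j : nat), (i < j < Kn D n)%N -> xv D n i < xv D n j) /\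
  (forall n (i : nat), (i < Kn D n)%N -> 0 < pr D n i) /\
  (forall n, \sum_(0 <= i < Kn D n) pr D n i = 1).

(* The class D_{r,K}: K_n <= K and (max_n x_n^{K_n}) / (min_n x_n^1) <= r. *)
Definition in_DrK (r : R) (D : typedist) : Prop :=
  wf_dist D /\ (forall n, (Kn D n <= K)%N) /\
  (forall n m : 'I_N, xv D n (Kn D n).-1 <= r * xv D m 0).

Definition profile := {ffun 'I_N -> 'I_K}.

Definition valid (D : typedist) (v : profile) : bool :=
  [forall n, (v n < Kn D n)%N].

Definition prob (D : typedist) (v : profile) : R :=
  \prod_(n < N) pr D n (v n).

Definition expect (D : typedist) (f : profile -> R) : R :=
  \sum_(v : profile | valid D v) prob D v * f v.

Definition upd (v : profile) (n : 'I_N) (i : 'I_K) : profile :=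
  [ffun m => if m == n then i else v m].

(* Monotone virtual valuation via the lower convex hull. *)
Definition gpt (D : typedist) (n : 'I_N) (j : nat) : R :=
  \sum_(0 <= l < j) pr D n l.

Definition hpt (D : typedist) (n : 'I_N) (j : nat) : R :=
  if (j < Kn D n)%N then - (xv D n j * \sum_(j <= l < Kn D n) pr D n l)
  else 0.

Definition lower_hull (D : typedist) (n : 'I_N) (g : R) : R :=
  inf [set y | exists lam : 'I_(Kn D n).+1 -> R,
        (forall j, 0 <= lam j) /\ \sum_j lam j = 1 /\
        \sum_j lam j * gpt D n j = g /\
        y = \sum_j lam j * hpt D n j].

Definition hbar (D : typedist) (n : 'I_N) (j : nat) : R :=
  lower_hull D n (gpt D n j).

Definition wbar (D : typedist) (n : 'I_N) (i : nat) : R :=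
  (hbar D n i.+1 - hbar D n i) / (gpt D n i.+1 - gpt D n i).

Definition alloc_rule := profile -> {set 'I_N} -> R.

Definition is_alloc (D : typedist) (Af : {set {set 'I_N}}) (pi : alloc_rule)
  : Prop :=
  forall v, valid D v ->
    (forall A, 0 <= pi v A) /\ (forall A, A \notin Af -> pi v A = 0) /\
    \sum_(A in Af) pi v A = 1.

Definition Q (Af : {set {set 'I_N}}) (pi : alloc_rule) (n : 'I_N)
  (v : profile) : R :=
  \sum_(A in Af | n \in A) pi v A.

Definition vwelfare (D : typedist) (v : profile) (A : {set 'I_N}) : R :=
  \sum_(n in A) wbar D n (v n).

(* Optimal allocation rule (virtual welfare maximizing with consistent
   tie-breaking). *)
Definition optimal (D : typedist) (Af : {set {set 'I_N}}) (pi : alloc_rule)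
  : Prop :=
  is_alloc D Af pi /\
  (forall v, valid D v -> forall A, A \in Af -> pi v A != 0 ->
     forall B, B \in Af -> vwelfare D v B <= vwelfare D v A) /\
  (forall n (i i' : 'I_K) v, valid D (upd v n i) -> valid D (upd v n i') ->
     xv D n i < xv D n i' -> wbar D n i = wbar D n i' ->
     Q Af pi n (upd v n i) <= Q Af pi n (upd v n i')).

Definition welfare (D : typedist) (Af : {set {set 'I_N}}) (pi : alloc_rule)
  : R :=
  expect D (fun v => \sum_(n < N) Q Af pi n v * xv D n (v n)).

(* Maximum social welfare MSW (the max is over the nonempty collection Af
   of nonnegative quantities, so 0 as default is harmless when set0 \in Af). *)
Definition MSW (D : typedist) (Af : {set {set 'I_N}}) : R :=
  expect D (fun v => \big[Num.max/0]_(A in Af) \sum_(n in A) xv D n (v n)).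

Definition ELR (D : typedist) (Af : {set {set 'I_N}}) (pi : alloc_rule) : R :=
  (MSW D Af - welfare D Af pi) / MSW D Af.

Definition opt_welfare_max (D : typedist) (Af : {set {set 'I_N}})
  (pi : alloc_rule) : Prop :=
  optimal D Af pi /\
  (forall pi', optimal D Af pi' -> welfare D Af pi' <= welfare D Af pi).

End Model.

Definition eta_wc (R : realType) (N : nat) (r : R) (K : nat)
  (Af : {set {set 'I_N}}) : \bar R :=
  ereal_sup [set e : \bar R | exists (D : typedist R N)
     (pi : alloc_rule R N K),
     in_DrK K r D /\ opt_welfare_max D Af pi /\ e = (ELR D Af pi)%:E].

(* Main.v *)
Require Import Defs.
From HB Require Import structures.
From mathcomp Require Import all_boot all_order all_algebra.
From mathcomp Require Import boolp classical_sets reals constructive_ereal ereal.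
From mathcomp Require Import lra ring.
Import Order.TTheory GRing.Theory Num.Theory.
Local Open Scope ring_scope.
Set Implicit Arguments.
Unset Strict Implicit.

Section Hull.
Variable R : realType.

Definition LH (K0 : nat) (g h : nat -> R) (t : R) : R :=
  inf [set y | exists lam : 'I_K0.+1 -> R,
        (forall j, 0 <= lam j) /\ \sum_j lam j = 1 /\
        \sum_j lam j * g j = t /\
        y = \sum_j lam j * h j].

Lemma inf_eqP (E : set R) y0 : E y0 -> (forall y, E y -> y0 <= y) -> inf E = y0.
Proof.
move=> Ey0 lb; apply/le_anti/andP; split.
  by apply: ge_inf => //; exists y0.
by apply: lb_le_inf; [exists y0|].
Qed.

Lemma LH1 (g h : nat -> R) x0 : 0 < x0 -> g 0%N = 0 -> g 1%N = 1 ->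
  h 0%N = - x0 -> h 1%N = 0 -> LH 1 g h 0 = - x0 /\ LH 1 g h 1 = 0.
Proof.
move=> x0p g0 g1 h0 h1; split; apply inf_eqP.
- exists (fun j : 'I_2 => if val j == 0%N then 1 else 0).
  rewrite !big_ord_recl !big_ord0 /= g0 g1 h0 h1; split; last (split; [|split]); try lra.
  by move=> j; case: ifP => _; lra.
- move=> y [lam [l0 [s1 [sg ->]]]]; move: s1 sg; rewrite !big_ord_recl !big_ord0 /= g0 g1 h0 h1.
  have := l0 ord0; have := l0 (lift ord0 ord0). nra.
- exists (fun j : 'I_2 => if val j == 1%N then 1 else 0).
  rewrite !big_ord_recl !big_ord0 /= g0 g1 h0 h1; split; last (split; [|split]); try lra.
  by move=> j; case: ifP => _; lra.
- move=> y [lam [l0 [s1 [sg ->]]]]; move: s1 sg; rewrite !big_ord_recl !big_ord0 /= g0 g1 h0 h1.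
  have := l0 ord0; have := l0 (lift ord0 ord0). nra.
Qed.

Lemma LH2 (g h : nat -> R) x0 x1 a b : 0 < x0 -> x0 < x1 -> 0 < a -> 0 < b -> a + b = 1 ->
  g 0%N = 0 -> g 1%N = a -> g 2%N = 1 ->
  h 0%N = - x0 -> h 1%N = - (x1 * b) -> h 2%N = 0 ->
  [/\ LH 2 g h 0 = - x0, LH 2 g h a = - (x1 * b) & LH 2 g h 1 = 0].
Proof.
move=> x0p x01 ap bp ab g0 g1 g2 h0 h1 h2; split; apply inf_eqP.
- exists (fun j : 'I_3 => if val j == 0%N then 1 else 0).
  rewrite !big_ord_recl !big_ord0 /= g0 g1 g2 h0 h1 h2; split; last (split; [|split]); try lra.
  by move=> j; case: ifP => _; lra.
- move=> y [lam [l0 [s1 [sg ->]]]]; move: s1 sg; rewrite !big_ord_recl !big_ord0 /= g0 g1 g2 h0 h1 h2.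
  have := l0 ord0; have := l0 (lift ord0 ord0); have := l0 (lift ord0 (lift ord0 ord0)).
  move: (lam ord0) (lam (lift ord0 ord0)) (lam (lift ord0 (lift ord0 ord0))) => l00 l1 l2 p2 p1 p0 s1 sg.
  have e1 : l1 * a = 0 by nra.
  have e1' : l1 = 0 by nra.
  nra.
- exists (fun j : 'I_3 => if val j == 1%N then 1 else 0).
  rewrite !big_ord_recl !big_ord0 /= g0 g1 g2 h0 h1 h2; split; last (split; [|split]); try lra.
  by move=> j; case: ifP => _; lra.
- move=> y [lam [l0 [s1 [sg ->]]]]; move: s1 sg; rewrite !big_ord_recl !big_ord0 /= g0 g1 g2 h0 h1 h2.
  have := l0 ord0; have := l0 (lift ord0 ord0); have := l0 (lift ord0 (lift ord0 ord0)).
  move: (lam ord0) (lam (lift ord0 ord0)) (lam (lift ord0 (lift ord0 ord0))) => l00 l1 l2 p2 p1 p0 s1 sg.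
  have e : l00 = b * (1 - l1) by nra.
  have : l00 * (x1 - x0) >= 0 by nra.
  nra.
- exists (fun j : 'I_3 => if val j == 2%N then 1 else 0).
  rewrite !big_ord_recl !big_ord0 /= g0 g1 g2 h0 h1 h2; split; last (split; [|split]); try lra.
  by move=> j; case: ifP => _; lra.
- move=> y [lam [l0 [s1 [sg ->]]]]; move: s1 sg; rewrite !big_ord_recl !big_ord0 /= g0 g1 g2 h0 h1 h2.
  have := l0 ord0; have := l0 (lift ord0 ord0); have := l0 (lift ord0 (lift ord0 ord0)).
  move: (lam ord0) (lam (lift ord0 ord0)) (lam (lift ord0 (lift ord0 ord0))) => l00 l1 l2 p2 p1 p0 s1 sg.
  have e : l00 + l1 * b = 0 by nra.
  have e1 : l1 * b = 0 by nra.
  have e0 : l00 = 0 by nra.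
  nra.
Qed.
End Hull.

Arguments LH {R}.
Section Main.
Variables (R : realType) (N : nat).
Implicit Types D : typedist R N.

Lemma lh_eq D n t : lower_hull D n t = LH (Kn D n) (gpt D n) (hpt D n) t.
Proof. by []. Qed.

Lemma hpt_lt D n j : (j < Kn D n)%N ->
  hpt D n j = - (xv D n j * \sum_(j <= l < Kn D n) pr D n l).
Proof. by rewrite /hpt => ->. Qed.

Lemma hpt_ge D n j : (Kn D n <= j)%N -> hpt D n j = 0.
Proof. by rewrite /hpt leqNgt => /negbTE ->. Qed.

Lemma sum2 (F : nat -> R) : \sum_(0 <= i < 2) F i = F 0%N + F 1%N.
Proof. by rewrite big_ltn // big_ltn // big_geq // addr0. Qed.

Lemma sum1 (F : nat -> R) : \sum_(0 <= i < 1) F i = F 0%N.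
Proof. by rewrite big_ltn // big_geq // addr0. Qed.

Lemma wbar_K1 D n : wf_dist D -> Kn D n = 1%N -> wbar D n 0 = xv D n 0.
Proof.
move=> [_ [xp [_ [_ ps]]]] HK.
have s1 : pr D n 0 = 1 by have := ps n; rewrite HK sum1.
have g0 : gpt D n 0 = 0 by rewrite /gpt big_geq.
have g1 : gpt D n 1 = 1 by rewrite /gpt sum1.
have h0 : hpt D n 0 = - xv D n 0.
  rewrite hpt_lt; last by rewrite HK. by rewrite HK sum1 s1 mulr1.
have h1 : hpt D n 1 = 0 by rewrite hpt_ge // HK.
have [L0 L1] := LH1 (xp n) g0 g1 h0 h1.
rewrite /wbar /hbar; change (lower_hull D n) with (LH (Kn D n) (gpt D n) (hpt D n)); rewrite HK g0 g1 L0 L1; rewrite subr0 divr1; lra.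
Qed.

Lemma wbar_K2 D n : wf_dist D -> Kn D n = 2%N ->
  wbar D n 1 = xv D n 1 /\
  wbar D n 0 = (xv D n 0 - pr D n 1 * xv D n 1) / pr D n 0.
Proof.
move=> [_ [xp [xinc [pp ps]]]] HK.
have s1 : pr D n 0 + pr D n 1 = 1 by have := ps n; rewrite HK sum2.
have p0 : 0 < pr D n 0 by apply: pp; rewrite HK.
have p1 : 0 < pr D n 1 by apply: pp; rewrite HK.
have x01 : xv D n 0 < xv D n 1 by apply: xinc; rewrite HK.
have g0 : gpt D n 0 = 0 by rewrite /gpt big_geq.
have g1 : gpt D n 1 = pr D n 0 by rewrite /gpt sum1.
have g2 : gpt D n 2 = 1 by rewrite /gpt sum2.
have h0 : hpt D n 0 = - xv D n 0.
  rewrite hpt_lt; last by rewrite HK. by rewrite HK sum2 s1 mulr1.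
have h1 : hpt D n 1 = - (xv D n 1 * pr D n 1).
  rewrite hpt_lt; last by rewrite HK. by rewrite HK big_ltn // big_geq // addr0.
have h2 : hpt D n 2 = 0 by rewrite hpt_ge // HK.
have [L0 L1 L2] := LH2 (xp n) x01 p0 p1 s1 g0 g1 g2 h0 h1 h2.
rewrite /wbar /hbar; change (lower_hull D n) with (LH (Kn D n) (gpt D n) (hpt D n)); rewrite HK g0 g1 g2 L0 L1 L2; split.
  have -> : 1 - pr D n 0 = pr D n 1 by lra.
  by rewrite opprK add0r mulfK // lt0r_neq0.
rewrite subr0; congr (_ / _); lra.
Qed.

End Main.


Lemma lra_aux (R : realType) (a b c d : R) : a + (c - d) <= b -> b <= a -> d < c -> False.
Proof. lra. Qed.

Lemma polyA (R : realType) (r x0 x1 p0 p1 : R) : 1 < r -> 0 < p1 -> p0 + p1 = 1 ->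
  p1 * x1 <= x0 -> x1 <= r * x0 ->
  (2 * r - 1) * (x0 * p0 - x0 + p1 * x1) <= (r - 1) * (x0 * p0 + p1 * x1).
Proof.
move=> r1 p1p s1 h1 h2.
have e : p0 = 1 - p1 by lra.
rewrite e.
have t1 : 0 <= (r - 1) * (x0 - p1 * x1) by apply: mulr_ge0; lra.
have t2 : 0 <= p1 * (r * x0 - x1) by apply: mulr_ge0; lra.
nra.
Qed.

Lemma polyB (R : realType) (r x0 x1 p0 p1 : R) : 1 < r -> 0 < p1 -> p0 + p1 = 1 ->
  x0 <= p1 * x1 -> x1 <= r * x0 ->
  (2 * r - 1) * (x0 * p0) <= (r - 1) * (x0 * p0 + p1 * x1).
Proof.
move=> r1 p1p s1 h1 h2.
have e : p0 = 1 - p1 by lra.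
rewrite e.
have t1 : 0 <= r * (p1 * x1 - x0) by apply: mulr_ge0; lra.
have t2 : 0 <= p1 * (r * x0 - x1) by apply: mulr_ge0; lra.
nra.
Qed.

Lemma ratio (R : realType) (r x0 x1 p0 p1 : R) : 1 < r -> 0 < x0 -> x0 < x1 ->
  x1 <= r * x0 -> 0 < p0 -> 0 < p1 -> p0 + p1 = 1 ->
  x0 - Num.max ((x0 - p1 * x1) / p0) 0 <=
  (r - 1) / (2 * r - 1) * (x0 + p1 / p0 * x1).
Proof.
move=> r1 x0p x01 xr p0p p1p s1.
have pos : 0 < p0 * (2 * r - 1) by apply: mulr_gt0; lra.
rewrite -(ler_pM2r pos).
have hc : (r - 1) / (2 * r - 1) * (2 * r - 1) = r - 1.
  by rewrite mulfVK //; apply: lt0r_neq0; lra.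
have hy : p1 / p0 * x1 * p0 = p1 * x1.
  by rewrite mulrAC mulfVK // lt0r_neq0.
have -> : (r - 1) / (2 * r - 1) * (x0 + p1 / p0 * x1) * (p0 * (2 * r - 1)) =
   ((r - 1) / (2 * r - 1) * (2 * r - 1)) * (x0 * p0 + p1 / p0 * x1 * p0) by ring.
rewrite hc hy.
have hw : (x0 - p1 * x1) / p0 * p0 = x0 - p1 * x1 by rewrite mulfVK // lt0r_neq0.
case: (leP ((x0 - p1 * x1) / p0) 0) => h.
- have h' : x0 - p1 * x1 <= 0 by move: h; rewrite ler_pdivrMr // mul0r.
  have -> : (x0 - 0) * (p0 * (2 * r - 1)) = (2 * r - 1) * (x0 * p0) by ring.
  apply: polyB => //; lra.
- have h' : 0 <= x0 - p1 * x1.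
    by rewrite -hw; apply: mulr_ge0 => //; apply: ltW.
  have -> : (x0 - (x0 - p1 * x1) / p0) * (p0 * (2 * r - 1)) =
     (2 * r - 1) * (x0 * p0 - (x0 - p1 * x1) / p0 * p0) by ring.
  rewrite hw.
  have -> : x0 * p0 - (x0 - p1 * x1) = x0 * p0 - x0 + p1 * x1 by ring.
  apply: polyA => //; lra.
Qed.

Lemma cc_aux (R : realType) (r : R) : 1 < r -> 0 <= (r - 1) / (2 * r - 1).
Proof. by move=> h; apply: divr_ge0; lra. Qed.

Section Core.
Variables (R : realType) (N : nat) (Af : {set {set 'I_N}}) (r : R)
  (D : typedist R N) (pi : alloc_rule R N 2).
Hypothesis Af0 : (finset.set0 : {set 'I_N}) \in Af.
Hypothesis Afdown : forall A B : {set 'I_N}, A \in Af -> B \subset A -> B \in Af.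
Hypothesis HD : in_DrK 2 r D.

Notation P := (profile N 2).

Lemma wfD : wf_dist D. Proof. by case: HD. Qed.

Lemma Kn_cases n : Kn D n = 1%N \/ Kn D n = 2%N.
Proof.
case: HD => [[K0 _] [K2 _]]; have := K0 n; have := K2 n.
by case: (Kn D n) => [|[|[|k]]] //; auto.
Qed.

Lemma xv_pos (v : P) n : valid D v -> 0 < xv D n (v n).
Proof.
case: wfD => _ [xp [xinc _]] /forallP /(_ n) vn.
case: (posnP (v n)) => [->|vp]; first exact: xp.
apply: lt_trans (xp n) _; apply: xinc; by rewrite vp vn.
Qed.

Lemma pr_pos (v : P) n : valid D v -> 0 < pr D n (v n).
Proof. case: wfD => _ [_ [_ [pp _]]] /forallP /(_ n) vn; exact: pp. Qed.

Lemma prob_ge0 (v : P) : valid D v -> 0 <= prob D v.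
Proof. by move=> Vv; apply: prodr_ge0 => n _; apply/ltW/pr_pos. Qed.

Lemma prob_gt0 (v : P) : valid D v -> 0 < prob D v.
Proof. by move=> Vv; apply: prodr_gt0 => n _; apply/pr_pos. Qed.

Definition val (v : P) (A : {set 'I_N}) := \sum_(n in A) xv D n (v n).

Definition Sel (v : P) : {set 'I_N} := [arg max_(A > finset.set0 in Af) val v A]%O.

Lemma Sel_spec v : Sel v \in Af /\ forall B, B \in Af -> val v B <= val v (Sel v).
Proof. rewrite /Sel; case: arg_maxP => // A HA Hm; split=> // B HB; exact: Hm. Qed.

Lemma val_ge0 v A : valid D v -> 0 <= val v A.
Proof. by move=> Vv; apply: sumr_ge0 => n _; apply/ltW/xv_pos. Qed.

Lemma M_eq v : valid D v ->
  \big[Num.max/0]_(A in Af) val v A = val v (Sel v).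
Proof.
move=> Vv; have [SA Sm] := Sel_spec v.
apply/le_anti/andP; split.
  apply: (big_ind (fun x => x <= val v (Sel v))); first exact: val_ge0.
    by move=> x y hx hy; rewrite ge_max hx hy.
  by move=> A HA; apply: Sm.
by rewrite (bigD1 (Sel v)) //= le_max lexx.
Qed.

Lemma valid_cases (v : P) n : valid D v ->
  (Kn D n = 1%N /\ nat_of_ord (v n) = 0%N) \/
  (Kn D n = 2%N /\ (nat_of_ord (v n) = 0%N \/ nat_of_ord (v n) = 1%N)).
Proof.
move=> /forallP /(_ n); case: (Kn_cases n) => ->.
  by rewrite ltnS leqn0 => /eqP; left.
by case: (v n) => [[|[|k]] ?] //= _; right; auto.
Qed.

Lemma wbar_le (v : P) n : valid D v -> wbar D n (v n) <= xv D n (v n).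
Proof.
move=> Vv; case: (valid_cases n Vv) => [[HK ->]|[HK [-> | ->]]].
- by rewrite (wbar_K1 wfD HK).
- case: (wbar_K2 wfD HK) => _ ->.
  case: wfD => _ [xp [xinc [pp ps]]].
  have p0 : 0 < pr D n 0 by apply: pp; rewrite HK.
  have p1 : 0 < pr D n 1 by apply: pp; rewrite HK.
  have x01 : xv D n 0 < xv D n 1 by apply: xinc; rewrite HK.
  have s1 : pr D n 0 + pr D n 1 = 1 by have := ps n; rewrite HK sum2.
  rewrite ler_pdivrMr //; nra.
- by case: (wbar_K2 wfD HK) => ->.
Qed.

Definition Wf (v : P) := \sum_(n < N) Q Af pi n v * xv D n (v n).

Lemma W_eq v : Wf v = \sum_(A in Af) pi v A * val v A.
Proof.
rewrite /Wf /Q.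
under eq_bigr => n _ do rewrite mulr_suml big_mkcondr.
rewrite exchange_big /=; apply: eq_bigr => A _.
rewrite /val mulr_sumr [RHS]big_mkcond /=; apply: eq_bigr => n _.
by case: (n \in A).
Qed.

Definition wp n i := Num.max (wbar D n i) 0.

Hypothesis Hopt : optimal D Af pi.

Lemma W_ge v : valid D v -> \sum_(n in Sel v) wp n (v n) <= Wf v.
Proof.
move=> Vv; have [SA Sm] := Sel_spec v.
case: Hopt => /(_ v Vv) [pi0 [piout pi1]] [Hvw _].
set B := [set m in Sel v | 0 <= wbar D m (v m)].
have BA : B \in Af.
  by apply: (Afdown SA); apply/fintype.subsetP => k; rewrite inE => /andP[].
have eB : vwelfare D v B = \sum_(n in Sel v) wp n (v n).
  rewrite /vwelfare big_mkcond [RHS]big_mkcond /=; apply: eq_bigr => m _.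
  rewrite inE /wp; case: (m \in Sel v); last by [].
  by rewrite andTb; case: leP.
suff h : vwelfare D v B <= Wf v by move: h; rewrite eB.
rewrite W_eq -[X in X <= _]mul1r -pi1 mulr_suml.
apply: ler_sum => A HA.
have [->|pnz] := eqVneq (pi v A) 0; first by rewrite !mul0r.
apply: ler_wpM2l => //.
apply: le_trans (Hvw v Vv A HA pnz B BA) _.
by apply: ler_sum => m _; apply: wbar_le.
Qed.

Notation E f := (@expect _ _ 2 D f).

Lemma E_le (f g : P -> R) : (forall v, valid D v -> f v <= g v) -> E f <= E g.
Proof.
move=> h; apply: ler_sum => v Vv; apply: ler_wpM2l; [exact: prob_ge0 | exact: h].
Qed.

Lemma E_ext (f g : P -> R) : (forall v, valid D v -> f v = g v) -> E f = E g.
Proof. by move=> h; apply: eq_bigr => v Vv; rewrite h. Qed.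

Lemma E_sum (F : 'I_N -> P -> R) :
  E (fun v => \sum_(n < N) F n v) = \sum_(n < N) E (F n).
Proof.
rewrite /expect; under eq_bigr => v _ do rewrite mulr_sumr.
by rewrite exchange_big.
Qed.

Lemma E_sub (f g : P -> R) : E f - E g = E (fun v => f v - g v).
Proof. by rewrite /expect -sumrB; apply: eq_bigr => v _; rewrite mulrBr. Qed.

Lemma E_ge0 (f : P -> R) : (forall v, valid D v -> 0 <= f v) -> 0 <= E f.
Proof. by move=> h; apply: sumr_ge0 => v Vv; apply: mulr_ge0; [exact: prob_ge0|exact: h]. Qed.

Lemma ord2_neq0 (i : 'I_2) : i != ord0 -> i = ord_max.
Proof. by case: i => [[|[|k]] ?] //= _; apply: val_inj. Qed.

Lemma updE (v : P) n i m : upd v n i m = if m == n then i else v m.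
Proof. by rewrite /upd ffunE. Qed.

Lemma valid_upd (v : P) n i : Kn D n = 2%N -> valid D (upd v n i) = valid D v.
Proof.
move=> HK; apply/forallP/forallP => h m; have := h m; rewrite ?updE;
  by case: eqP => [-> _|//]; rewrite HK ltn_ord.
Qed.

Lemma reindex2 n (F : P -> R) : Kn D n = 2%N ->
  \sum_(v | valid D v && (v n != ord0)) F v =
  \sum_(v | valid D v && (v n == ord0)) F (upd v n ord_max).
Proof.
move=> HK.
rewrite (reindex_onto (fun v => upd v n ord_max) (fun v => upd v n ord0)) /=.
  apply: eq_bigl => v; rewrite valid_upd // updE eqxx /=.
  case: (valid D v) => //=; apply/eqP/eqP => [<-|vn]; first by rewrite updE eqxx.
  by apply/ffunP => m; rewrite !updE; case: eqP => // ->.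
move=> v /andP[_ vn]; apply/ffunP => m; rewrite !updE.
by case: eqP => // ->; rewrite (ord2_neq0 vn).
Qed.

Lemma prob_upd (v : P) n i : prob D (upd v n i) * pr D n (v n) = prob D v * pr D n i.
Proof.
rewrite /prob (bigD1 n) //= [in RHS](bigD1 n) //= updE eqxx.
have -> : \prod_(m < N | m != n) pr D m (upd v n i m) = \prod_(m < N | m != n) pr D m (v m).
  by apply: eq_bigr => m /negbTE mn; rewrite updE mn.
ring.
Qed.

Lemma val_upd (v : P) n i B : val (upd v n i) B =
  val v B + (if n \in B then xv D n i - xv D n (v n) else 0).
Proof.
rewrite /val; case: (boolP (n \in B)) => nB.
  rewrite (bigD1 n nB) [in RHS](bigD1 n nB) /= updE eqxx.
  have -> : \sum_(m in B | m != n) xv D m (upd v n i m) = \sum_(m in B | m != n) xv D m (v m).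
    by apply: eq_bigr => m /andP[_ /negbTE mn]; rewrite updE mn.
  lra.
rewrite addr0; apply: eq_bigr => m mB; rewrite updE; case: eqP => // mn.
by move: nB; rewrite -mn mB.
Qed.

Lemma Sel_mono (v : P) n : Kn D n = 2%N -> valid D v -> v n = ord0 ->
  n \in Sel v -> n \in Sel (upd v n ord_max).
Proof.
move=> HK Vv vn nS; apply/negPn/negP => nT.
have [SA Sm] := Sel_spec v.
have [TA Tm] := Sel_spec (upd v n ord_max).
have x01 : xv D n 0 < xv D n 1.
  by case: wfD => _ [_ [xinc _]]; apply: xinc; rewrite HK.
have h1 := Tm _ SA; rewrite val_upd val_upd nS (negbTE nT) vn addr0 in h1.
have e0 : xv D n (@ord0 1) = xv D n 0 by [].
have e1 : xv D n (@ord_max 1) = xv D n 1 by [].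
rewrite e0 e1 in h1.
have h2 := Sm _ TA.
exact: (lra_aux h1 h2 x01).
Qed.
Hypothesis r1 : 1 < r.
Definition cc := (r - 1) / (2 * r - 1).

Lemma cc_ge0 : 0 <= cc.
Proof. exact: cc_aux r1. Qed.

Definition ee n i := xv D n i - wp n i.
Definition gain n := E (fun v => if n \in Sel v then xv D n (v n) else 0).
Definition loss n := E (fun v => if n \in Sel v then ee n (v n) else 0).

Lemma E0 : E (fun _ => 0) = 0.
Proof. by rewrite /expect big1 // => v _; rewrite mulr0. Qed.

Lemma gain_ge0 n : 0 <= gain n.
Proof. by apply: E_ge0 => v Vv; case: ifP => // _; apply/ltW/xv_pos. Qed.

Lemma loss_le n : loss n <= cc * gain n.
Proof.
case: (Kn_cases n) => HK.
  apply: (@le_trans _ _ 0); last by apply: mulr_ge0; [exact: cc_ge0|exact: gain_ge0].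
  rewrite -E0; apply: E_le => v Vv.
  case: (valid_cases n Vv) => [[_ vn]|[]]; last by rewrite HK.
  case: ifP => // _; rewrite /ee /wp vn (wbar_K1 wfD HK).
  by rewrite max_l ?subrr //; apply/ltW; case: wfD => _ [xp _]; apply: xp.
have [w1 w0] := wbar_K2 wfD HK.
case: wfD => _ [xp [xinc [pp ps]]].
have p0 : 0 < pr D n 0 by apply: pp; rewrite HK.
have p1 : 0 < pr D n 1 by apply: pp; rewrite HK.
have x01 : xv D n 0 < xv D n 1 by apply: xinc; rewrite HK.
have s1 : pr D n 0 + pr D n 1 = 1 by have := ps n; rewrite HK sum2.
have xr : xv D n 1 <= r * xv D n 0.
  by case: HD => _ [_ xr]; have := xr n n; rewrite HK.
have Hsplit : forall f : P -> R, E f =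
  \sum_(v | valid D v && (v n == ord0)) prob D v * f v +
  \sum_(v | valid D v && (v n != ord0)) prob D v * f v.
  by move=> f; rewrite /expect (bigID (fun v : P => v n == ord0)).
have ee1 : ee n (@ord_max 1) = 0.
  rewrite /ee /wp /= w1 max_l ?subrr //; apply: ltW; apply: lt_trans x01; exact: xp.
rewrite /loss /gain !Hsplit.
have -> : \sum_(v | valid D v && (v n != ord0))
    prob D v * (if n \in Sel v then ee n (v n) else 0) = 0.
  apply: big1 => v /andP[Vv vn]; rewrite (ord2_neq0 vn) ee1.
  by case: ifP => _; rewrite mulr0.
rewrite addr0 (reindex2 _ HK) -big_split mulr_sumr /=.
apply: ler_sum => v /andP[Vv /eqP vn0].
rewrite updE eqxx vn0.
have hp := prob_upd v n (@ord_max 1); rewrite vn0 in hp.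
have hp' : prob D (upd v n ord_max) = prob D v * (pr D n 1 / pr D n 0).
  rewrite mulrA -hp mulfK //; exact: lt0r_neq0.
have pv := prob_ge0 Vv.
case: (boolP (n \in Sel v)) => nS.
  have nS' := Sel_mono HK Vv vn0 nS; rewrite nS' hp'.
  have -> : cc * (prob D v * xv D n (@ord0 1) +
      prob D v * (pr D n 1 / pr D n 0) * xv D n (@ord_max 1)) =
    prob D v * (cc * (xv D n 0 + pr D n 1 / pr D n 0 * xv D n 1)) by rewrite /=; ring.
  apply: ler_wpM2l => //.
  rewrite /ee /wp /= w0 /cc; apply: ratio => //.
rewrite !mulr0 add0r; apply: mulr_ge0; first exact: cc_ge0.
apply: mulr_ge0; first by rewrite hp'; apply: mulr_ge0 => //; apply: divr_ge0; apply: ltW.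
case: ifP => // _; apply: ltW; apply: lt_trans x01; exact: xp.
Qed.

Hypothesis HN : (0 < N)%N.
Hypothesis Hcov : forall n : 'I_N, exists2 A, A \in Af & n \in A.

Lemma MSW_eq : MSW 2 D Af = \sum_(n < N) gain n.
Proof.
rewrite /MSW -E_sum; apply: E_ext => v Vv; rewrite M_eq // /val big_mkcond.
by [].
Qed.

Lemma MSW_gt0 : 0 < MSW 2 D Af.
Proof.
set v0 : P := [ffun _ => ord0].
have V0 : valid D v0.
  by apply/forallP => m; rewrite ffunE; case: wfD => [K0 _]; exact: K0.
set n0 : 'I_N := Ordinal HN.
have [A0 A0in n0A] := Hcov n0.
rewrite /MSW /expect (bigD1 v0 V0) /=.
have a_pos : 0 < prob D v0 * \big[Num.max/0]_(A in Af) val v0 A.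
  apply: mulr_gt0; first exact: prob_gt0.
  rewrite M_eq //; have [_ Sm] := Sel_spec v0.
  apply: (lt_le_trans _ (Sm _ A0in)).
  rewrite /val (bigD1 n0 n0A) /=.
  apply: (lt_le_trans (xv_pos n0 V0)); rewrite lerDl.
  by apply: sumr_ge0 => m _; apply/ltW/xv_pos.
apply: (lt_le_trans a_pos); rewrite lerDl.
apply: sumr_ge0 => v /andP[Vv _]; apply: mulr_ge0; first exact: prob_ge0.
by rewrite M_eq //; apply: val_ge0.
Qed.

Lemma ELR_le : ELR D Af pi <= cc.
Proof.
have Mp := MSW_gt0.
rewrite /ELR ler_pdivrMr //.
have step : MSW 2 D Af - welfare D Af pi <= \sum_(n < N) loss n.
  rewrite /MSW /welfare E_sub /loss -E_sum; apply: E_le => v Vv.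
  rewrite M_eq // -big_mkcond /= /ee sumrB /val lerD2l lerN2.
  exact: (W_ge Vv).
apply: le_trans step _.
rewrite MSW_eq mulr_sumr; apply: ler_sum => n _; exact: loss_le.
Qed.

End Core.

Unset Implicit Arguments.
Set Strict Implicit.

Theorem proposition3 (R : realType) (N : nat) (Af : {set {set 'I_N}})
  (r : R) :
  (0 < N)%N ->
  (finset.set0 : {set 'I_N}) \in Af ->
  (forall A B : {set 'I_N}, A \in Af -> B \subset A -> B \in Af) ->
  (forall n : 'I_N, exists2 A, A \in Af & n \in A) ->
  1 < r ->
  (eta_wc r 2%N Af <= (((r - 1) / (2 * r - 1))%R)%:E)%E /\
  (r - 1) / (2 * r - 1) <= 1 / 2.
Proof.
move=> HN Af0 Afdown Hcov r1; split.
  apply: ge_ereal_sup => e [D [pi [HD [Hpi ->]]]].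
  rewrite lee_fin.
  have := @ELR_le R N Af r D pi Af0 Afdown HD (proj1 Hpi) r1 HN Hcov.
  by [].
rewrite ler_pdivrMr; last lra.
lra.
Qed.
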